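(* In every simple symmetric fractional hedonic game with $n$ agents, every sequence of IS deviations starting from the singleton partition has length $\mathcal O(n^2)$ (in particular it terminates). Moreover, there are simple symmetric fractional hedonic games with $n$ agents (for infinitely many $n$) admitting a sequence of IS deviations starting from the singleton partition of length $\Omega(n\sqrt n)$.
   Context: A fractional hedonic game (FHG) on agents $N$, $|N|=n$, is given by utility functions $v_i:N\to\mathbb R$ with $v_i(i)=0$; agent $i$'s utility for a coalition $C\ni i$ is $\frac{1}{|C|}\sum_{j\in C}v_i(j)$. It is simple if all $v_i(j)\in\{0,1\}$ and symmetric if $v_i(j)=v_j(i)$; a simple symmetric FHG is thus given by an undirected graph. The singleton partition is $\{\{i\}:i\in N\}$. An IS deviation of agent $i$ from partition $\pi$ to $\pi'$ is a move of $i$ alone from $\pi(i)$ into another coalition of $\pi$ or into a new singleton such that $i$ strictly prefers $\pi'(i)$ to $\pi(i)$ and every $j\in\pi'(i)\setminus\{i\}$ weakly prefers $\pi'(j)$ to $\pi(j)$. *)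

(* Defs.v *)
From mathcomp Require Import all_boot all_order all_algebra.
Set Implicit Arguments. Unset Strict Implicit. Unset Printing Implicit Defensive.
Import Order.TTheory GRing.Theory Num.Theory.

(* A simple symmetric fractional hedonic game on agents T is an undirected
   graph, given by a symmetric irreflexive relation e : rel T
   (v_i(j) = 1 iff e i j). *)
Definition simple_symmetric_game (T : finType) (e : rel T) : Prop :=
  symmetric e /\ irreflexive e.

Definition fhg_utility (T : finType) (e : rel T) (i : T) (C : {set T}) : rat :=
  (#|[set j in C | e i j]|%:R / #|C|%:R)%R.

Definition singleton_partition (T : finType) : {set {set T}} :=
  [set [set i] | i : T].

(* The partition obtained from P by moving i alone out of its coalition
   P(i) into the coalition C (C \in P, or C = set0 for a new singleton).
   The (possibly) empty rest of P(i) is removed. *)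
Definition move (T : finType) (P : {set {set T}}) (i : T) (C : {set T})
  : {set {set T}} :=
  ((P :\ pblock P i :\ C) :|: [set pblock P i :\ i; i |: C]) :\ set0.

Definition IS_deviation (T : finType) (e : rel T) (P : {set {set T}})
    (i : T) (C : {set T}) : Prop :=
  ((C \in P /\ i \notin C) \/ C = set0) /\
  (fhg_utility e i (pblock P i) < fhg_utility e i (i |: C))%R /\
  (forall j, j \in C -> (fhg_utility e j C <= fhg_utility e j (i |: C))%R).

Definition IS_step (T : finType) (e : rel T) (P P' : {set {set T}}) : Prop :=
  exists i C, IS_deviation e P i C /\ P' = move P i C.

Definition IS_sequence_from_singletons (T : finType) (e : rel T)
    (m : nat) (f : nat -> {set {set T}}) : Prop :=
  f 0 = singleton_partition T /\ (forall k, k < m -> IS_step e (f k) (f k.+1)).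

(* Main.v *)
Require Import Defs.
From mathcomp Require Import all_boot all_order all_algebra.
From mathcomp Require Import zify ring lra.
Set Implicit Arguments. Unset Strict Implicit. Unset Printing Implicit Defensive.
Import Order.TTheory GRing.Theory Num.Theory.

Definition cls (T : finType) (g : T -> nat) (i : T) : {set T} := [set j | g j == g i].
Definition Pof (T : finType) (g : T -> nat) : {set {set T}} := [set cls g i | i : T].
Definition relab (T : finType) (g : T -> nat) (i : T) (c : nat) : T -> nat :=
  fun j => if j == i then c else g j.

Lemma mem_cls (T : finType) (g : T -> nat) x y : (y \in cls g x) = (g y == g x).
Proof. by rewrite inE. Qed.

Lemma cls_eq (T : finType) (g : T -> nat) x y : g x = g y -> cls g x = cls g y.
Proof. by rewrite /cls => ->. Qed.

Lemma triv_Pof (T : finType) (g : T -> nat) : trivIset (Pof g).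
Proof.
apply/trivIsetP => A B /imsetP [a _ ->] /imsetP [b _ ->] neq.
apply/pred0P => y /=; rewrite !mem_cls.
apply/negP => /andP [/eqP ha /eqP hb]; move: neq; rewrite (@cls_eq _ g a b) ?eqxx //.
by rewrite -ha hb.
Qed.

Lemma pblock_Pof (T : finType) (g : T -> nat) i : pblock (Pof g) i = cls g i.
Proof.
apply: def_pblock; first exact: triv_Pof.
  by apply/imsetP; exists i.
by rewrite mem_cls.
Qed.

Lemma cls_relab (T : finType) (g : T -> nat) i i' j : g i' != g i ->
  cls (relab g i (g i')) j =
  if (j == i) || (g j == g i') then i |: cls g i'
  else if g j == g i then cls g i :\ i else cls g j.
Proof.
move=> ne; apply/setP => y.
case: (eqVneq j i) => [->|ji] /=.
  rewrite !inE /relab eqxx; case: (eqVneq y i) => [->|yi] //=; by rewrite eqxx.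
case: (eqVneq (g j) (g i')) => [e1|h1] /=.
  rewrite !inE /relab (negbTE ji) e1; case: (eqVneq y i) => [->|yi] //=; by rewrite eqxx.
case: (eqVneq (g j) (g i)) => [e2|h2] /=.
  rewrite !inE /relab (negbTE ji) e2; case: (eqVneq y i) => [->|yi] //=.
  by rewrite (negbTE ne).
rewrite !inE /relab (negbTE ji); case: (eqVneq y i) => [->|yi] //=.
by rewrite eq_sym (negbTE h1) eq_sym (negbTE h2).
Qed.

Lemma move_Pof (T : finType) (g : T -> nat) i i' : g i' != g i ->
  move (Pof g) i (cls g i') = Pof (relab g i (g i')).
Proof.
move=> ne; rewrite /move pblock_Pof; apply/setP => X.
rewrite !inE.
apply/idP/idP.
- case/andP => X0 /orP [/andP [XC /andP [XA XP]] | /orP [/eqP XE | /eqP XE]]; try subst X.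
  + case/imsetP: XP => j _ Xj; subst X.
    have h1 : g j != g i' by apply: contraNneq XC => h; rewrite (cls_eq h).
    have h2 : g j != g i by apply: contraNneq XA => h; rewrite (cls_eq h).
    have ji : j != i by apply: contraNneq h2 => ->.
    apply/imsetP; exists j => //; rewrite cls_relab // (negbTE ji) (negbTE h1) /=.
    by rewrite (negbTE h2).
  + case/set0Pn: X0 => j; rewrite !inE => /andP [ji gj].
    apply/imsetP; exists j => //; rewrite cls_relab // (negbTE ji) /= gj.
    suff -> : (g j == g i') = false by [].
    by apply/negbTE; rewrite (eqP gj) eq_sym.
  + by apply/imsetP; exists i => //; rewrite cls_relab // eqxx.
- case/imsetP => j _ ->; rewrite cls_relab //.
  have nz : forall Y : {set T}, j \in Y -> Y != set0.
    by move=> Y jY; apply/set0Pn; exists j.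
  case: ifP => [/orP h|/norP [ji gji]].
    rewrite eqxx !orbT andbT; apply: nz; rewrite !inE.
    by case: h => [->|]; rewrite ?eqxx //= => ->; rewrite orbT.
  case: ifP => gi.
    rewrite eqxx !orbT andbT; apply: nz; by rewrite !inE ji gi.
  rewrite (_ : cls g j != set0) /=; last by apply: nz; rewrite mem_cls.
  apply/orP; left; apply/andP; split.
    by apply/negP => /eqP /setP /(_ j); rewrite !mem_cls eqxx (negbTE gji).
  apply/andP; split; last by apply/imsetP; exists j.
  by apply/negP => /eqP /setP /(_ j); rewrite !mem_cls eqxx gi.
Qed.

Lemma frac_lt (p q r s : nat) : (0 < q)%N -> (0 < s)%N ->
  ((p%:R / q%:R : rat) < r%:R / s%:R)%R = (p * s < r * q)%N.
Proof.
move=> q0 s0.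
by rewrite ltr_pdivrMr ?ltr0n // mulrAC ltr_pdivlMr ?ltr0n // -!natrM ltr_nat.
Qed.

Lemma frac_le (p q r s : nat) : (0 < q)%N -> (0 < s)%N ->
  ((p%:R / q%:R : rat) <= r%:R / s%:R)%R = (p * s <= r * q)%N.
Proof.
move=> q0 s0.
by rewrite ler_pdivrMr ?ltr0n // mulrAC ler_pdivlMr ?ltr0n // -!natrM ler_nat.
Qed.

Lemma frac_ge0 (p q : nat) : (0 <= (p%:R / q%:R : rat))%R.
Proof. by rewrite divr_ge0 ?ler0n. Qed.

Lemma card_sep_U1 (T : finType) (p : pred T) (i : T) (C : {set T}) : i \notin C ->
  #|[set y in i |: C | p y]| = p i + #|[set y in C | p y]|.
Proof.
move=> iC.
case pi: (p i).
  rewrite (_ : [set y in i |: C | p y] = i |: [set y in C | p y]).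
    by rewrite cardsU1 inE (negbTE iC).
  by apply/setP => y; rewrite !inE; case: (eqVneq y i) => [->|] //=; rewrite pi.
rewrite (_ : [set y in i |: C | p y] = [set y in C | p y]) //.
by apply/setP => y; rewrite !inE; case: (eqVneq y i) => [->|] //=; rewrite pi andbF.
Qed.

Definition cliq (T : finType) (e : rel T) (g : T -> nat) :=
  forall x y, g x = g y -> x != y -> e x y.

Lemma card_cliq (T : finType) (e : rel T) (g : T -> nat) x :
  irreflexive e -> cliq e g -> #|[set y in cls g x | e x y]| = (#|cls g x|).-1.
Proof.
move=> irr cq.
rewrite (cardsD1 x (cls g x)) mem_cls eqxx add1n /=.
apply: eq_card => y; rewrite !inE.
case: (eqVneq y x) => [->|yx] /=; first by rewrite irr andbF.
case: (eqVneq (g y) (g x)) => [h|] //=.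
by apply: cq => //; rewrite eq_sym.
Qed.

Lemma dev_cliq (T : finType) (e : rel T) (g : T -> nat) i C :
  symmetric e -> irreflexive e -> cliq e g -> IS_deviation e (Pof g) i C ->
  exists i', [/\ g i' != g i, C = cls g i', (#|cls g i| <= #|cls g i'|)%N
           & forall y, g y = g i' -> e i y].
Proof.
move=> sym irr cq [[[CP iC] | C0] [ui uj]]; rewrite pblock_Pof in ui; last first.
  exfalso; move: ui; rewrite C0 /fhg_utility.
  rewrite (_ : [set j in i |: set0 | e i j] = set0); last first.
    by apply/setP => y; rewrite !inE orbF; case: (eqVneq y i) => [->|] //=; rewrite irr.
  by rewrite cards0 mul0r ltNge frac_ge0.
case/imsetP: CP => i' _ CE; subst C.
have ne : g i' != g i by move: iC; rewrite mem_cls eq_sym.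
have c0 : (0 < #|cls g i'|)%N by apply/card_gt0P; exists i'; rewrite mem_cls.
have a0 : (0 < #|cls g i|)%N by apply/card_gt0P; exists i; rewrite mem_cls.
have adj : forall y, g y = g i' -> e i y.
  move=> y gy; apply/negPn/negP => ny.
  have yC : y \in cls g i' by rewrite mem_cls gy.
  have := uj y yC; rewrite /fhg_utility (card_sep_U1 _ iC) (cardsU1 i) (negbTE iC).
  rewrite -(cls_eq gy) card_cliq // (cls_eq gy) (sym y i) (negbTE ny) add0n.
  rewrite frac_le // ?add1n //.
  move=> h.
  have c1 : #|cls g i'| = 1%N by nia.
  have z : #|[set z in cls g i' | e i z]| = 0%N.
    apply/eqP; rewrite -leqn0.
    have sub : [set z in cls g i' | e i z] \subset cls g i' :\ y.
      apply/subsetP => z; rewrite !inE => /andP [zC ez]; rewrite zC andbT.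
      by apply: contraTneq ez => ->.
    have := subset_leq_card sub.
    have := cardsD1 y (cls g i'); rewrite yC c1 => h1 h2; lia.
  move: ui; rewrite /fhg_utility (card_sep_U1 _ iC) irr z mul0r.
  by rewrite ltNge frac_ge0.
exists i'; split => //.
move: ui; rewrite /fhg_utility (card_sep_U1 _ iC) irr card_cliq //.
rewrite (_ : [set z in cls g i' | e i z] = cls g i'); last first.
  by apply/setP => z; rewrite !inE; case: (eqVneq (g z) (g i')) => [/adj ->|].
rewrite (cardsU1 i) (negbTE iC) frac_lt // add1n => h.
nia.
Qed.

Lemma cliq_relab (T : finType) (e : rel T) (g : T -> nat) i i' :
  symmetric e -> cliq e g -> (forall y, g y = g i' -> e i y) ->
  cliq e (relab g i (g i')).
Proof.
move=> sym cq adj x y; rewrite /relab.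
case: (eqVneq x i) => [->|xi]; case: (eqVneq y i) => [->|yi] //=.
- by move=> h _; apply: adj.
- by move=> h _; rewrite sym; apply: adj.
- by apply: cq.
Qed.

Definition Phi (T : finType) (g : T -> nat) : nat := \sum_(x : T) #|cls g x|.

Lemma sum_ind (T : finType) (g : T -> nat) i c :
  \sum_(x | x != i) ((g x == c) : nat) = #|[set x | (x != i) && (g x == c)]|.
Proof.
rewrite -sum1_card big_mkcond [RHS]big_mkcond /=.
apply: eq_bigr => x _; rewrite inE.
by case: (x != i); case: (g x == c).
Qed.

Lemma Phi_relab (T : finType) (g : T -> nat) i i' : g i' != g i ->
  Phi (relab g i (g i')) + 2 * #|cls g i| = Phi g + 2 * #|cls g i'| + 2.
Proof.
move=> ne; rewrite /Phi (bigD1 i) //= [\sum_(x : T) #|cls g x|](bigD1 i) //=.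
have iC : i \notin cls g i' by rewrite mem_cls eq_sym.
rewrite cls_relab // eqxx /= cardsU1 (negbTE iC).
have key : \sum_(x | x != i) #|cls (relab g i (g i')) x| + \sum_(x | x != i) ((g x == g i) : nat)
         = \sum_(x | x != i) #|cls g x| + \sum_(x | x != i) ((g x == g i') : nat).
  rewrite -!big_split /=; apply: eq_bigr => x xi.
  rewrite cls_relab // (negbTE xi) /=.
  case: (eqVneq (g x) (g i')) => [h|h1] /=.
    rewrite cardsU1 (negbTE iC) (cls_eq h) h (negbTE ne) /=; lia.
  case: (eqVneq (g x) (g i)) => [h|h2] /=.
    rewrite (cls_eq h) (cardsD1 i (cls g i)) mem_cls eqxx; lia.
  lia.
rewrite !sum_ind in key.
have e1 : #|[set x | (x != i) && (g x == g i)]| = (#|cls g i|).-1.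
  rewrite (cardsD1 i (cls g i)) mem_cls eqxx add1n /=.
  by apply: eq_card => x; rewrite !inE.
have e2 : #|[set x | (x != i) && (g x == g i')]| = #|cls g i'|.
  apply: eq_card => x; rewrite !inE.
  by case: (eqVneq x i) => [->|] //=; rewrite eq_sym (negbTE ne).
have a0 : (0 < #|cls g i|)%N by apply/card_gt0P; exists i; rewrite mem_cls.
rewrite e1 e2 in key.
lia.
Qed.

Lemma Phi_le (T : finType) (g : T -> nat) : (Phi g <= #|T| * #|T|)%N.
Proof.
rewrite /Phi -sum_nat_const.
by apply: leq_sum => x _; apply: max_card.
Qed.

Definition g0 (n : nat) : 'I_n -> nat := fun x => nat_of_ord x.

Lemma cls_g0 n (x : 'I_n) : cls (@g0 n) x = [set x].
Proof. by apply/setP => y; rewrite !inE /g0. Qed.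

Lemma Pof_g0 n : Pof (@g0 n) = singleton_partition 'I_n.
Proof. by rewrite /Pof /singleton_partition; apply: eq_imset => x; rewrite cls_g0. Qed.

Lemma Phi_g0 n : Phi (@g0 n) = n.
Proof.
rewrite /Phi (eq_bigr (fun _ => 1%N)) => [|x _]; last by rewrite cls_g0 cards1.
by rewrite sum1_card card_ord.
Qed.

Lemma upper n (e : rel 'I_n) : simple_symmetric_game e ->
  forall (m : nat) (f : nat -> {set {set 'I_n}}),
    IS_sequence_from_singletons e m f -> (m <= 1 * n ^ 2)%N.
Proof.
move=> [sym irr] m f [f0 st].
have inv : forall k, (k <= m)%N -> exists g, [/\ f k = Pof g, cliq e g & (n + 2 * k <= Phi g)%N].
  elim=> [|k IH] km.
    exists (@g0 n); split.
    - by rewrite f0 Pof_g0.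
    - by move=> x y h; rewrite /g0 in h; move=> /eqP []; apply: val_inj.
    - by rewrite Phi_g0 muln0 addn0.
  have [g [fk cq ph]] := IH (ltnW km).
  have [i [C [dev fk1]]] := st k km.
  rewrite fk in dev fk1.
  have [i' [ne CE le adj]] := dev_cliq sym irr cq dev.
  exists (relab g i (g i')); split.
  - by rewrite fk1 CE move_Pof.
  - exact: cliq_relab.
  - have := Phi_relab ne; move: le ph; set a := #|cls g i|; set c := #|cls g i'|; set P1 := Phi g; set Q := Phi (relab _ _ _); lia.
have [g [_ _ ph]] := inv m (leqnn m).
have := Phi_le g; rewrite card_ord => h.
rewrite mul1n -mulnn; lia.
Qed.

Definition ce (n : nat) : rel 'I_n := fun i j => i != j.
Arguments ce n : clear implicits.

Lemma ce_game n : simple_symmetric_game (ce n).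
Proof. by split; [move=> x y; rewrite /ce eq_sym | move=> x; rewrite /ce eqxx]. Qed.

Definition reach n (m : nat) (P : {set {set 'I_n}}) :=
  exists f, IS_sequence_from_singletons (ce n) m f /\ f m = P.

Lemma reach0 n : reach 0 (singleton_partition 'I_n).
Proof. by exists (fun _ => singleton_partition 'I_n); split. Qed.

Lemma reach_step n m (P P' : {set {set 'I_n}}) :
  reach m P -> IS_step (ce n) P P' -> reach m.+1 P'.
Proof.
move=> [f [[f0 st] fm]] stp.
exists (fun t => if (t <= m)%N then f t else P'); split; last by rewrite ltnn.
split => //= k km.
case: (ltngtP k m) => [lt|gt|eq].
- by apply: st.
- by move: km; rewrite ltnS leqNgt gt.
- by subst k; rewrite ?leqnn ?ltnn -?fm; move: stp; rewrite -fm.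
Qed.

Definition cnt n (g : 'I_n -> nat) (c : nat) : nat := #|[set j | g j == c]|.

Definition Reach n (m : nat) (s : nat -> nat) :=
  exists g : 'I_n -> nat, reach m (Pof g) /\ forall c, cnt g c = s c.

Lemma IS_complete n (g : 'I_n -> nat) i i' : g i' != g i ->
  (#|cls g i| <= #|cls g i'|)%N -> IS_deviation (ce n) (Pof g) i (cls g i').
Proof.
move=> ne le.
have iC : i \notin cls g i' by rewrite mem_cls eq_sym.
have cq : cliq (ce n) g by move=> x y _; rewrite /ce.
have irr : irreflexive (ce n) by move=> x; rewrite /ce eqxx.
have c0 : (0 < #|cls g i'|)%N by apply/card_gt0P; exists i'; rewrite mem_cls.
have a0 : (0 < #|cls g i|)%N by apply/card_gt0P; exists i; rewrite mem_cls.
split; first by left; split => //; apply/imsetP; exists i'.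
split.
  rewrite pblock_Pof /fhg_utility (card_sep_U1 _ iC) irr card_cliq //.
  rewrite (_ : [set z in cls g i' | ce n i z] = cls g i'); last first.
    apply/setP => z; rewrite !inE /ce.
    by case: (eqVneq z i) => [->|] //=; rewrite ?andbT // andbF eq_sym (negbTE ne).
  rewrite (cardsU1 i) (negbTE iC) frac_lt // add1n; nia.
move=> j jC.
have gj : g j = g i' by move: jC; rewrite mem_cls => /eqP.
rewrite /fhg_utility (card_sep_U1 _ iC) -(cls_eq gj) card_cliq //.
rewrite (cls_eq gj) (cardsU1 i) (negbTE iC).
have -> : ce n j i.
  by rewrite /ce; apply: contraNneq iC => <-.
rewrite frac_le // add1n; nia.
Qed.

Lemma cnt_relab n (g : 'I_n -> nat) i b c : b != g i ->
  cnt (relab g i b) c =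
  if c == g i then (cnt g c).-1 else if c == b then (cnt g c).+1 else cnt g c.
Proof.
move=> ne; rewrite /cnt.
case: (eqVneq c (g i)) => [->|ca].
  rewrite (cardsD1 i [set j | g j == g i]) [i \in _]inE eqxx /=.
  apply: eq_card => x; rewrite !inE /relab.
  by case: (eqVneq x i) => [->|] //=; rewrite (negbTE ne).
case: (eqVneq c b) => [->|cb].
  rewrite (cardsD1 i [set j | relab g i b j == b]) [i \in _]inE /relab !eqxx add1n.
  congr (_.+1); apply: eq_card => x; rewrite !inE.
  case: (eqVneq x i) => [->|] //=.
  by rewrite eq_sym (negbTE ne).
apply: eq_card => x; rewrite !inE /relab.
case: (eqVneq x i) => [->|] //=.
by rewrite eq_sym (negbTE cb) eq_sym (negbTE ca).
Qed.

Lemma Reach_move n m s a b : Reach n m s -> a != b -> (0 < s a)%N -> (s a <= s b)%N ->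
  exists s', [/\ Reach n m.+1 s', s' a = (s a).-1, s' b = (s b).+1
             & forall x, x != a -> x != b -> s' x = s x].
Proof.
move=> [g [rg cg]] ab sa0 le.
have [i ia] : exists i, g i = a.
  have : (0 < cnt g a)%N by rewrite cg.
  by case/card_gt0P => k; rewrite inE => /eqP; exists k.
have [i' ib] : exists i, g i = b.
  have : (0 < cnt g b)%N by rewrite cg; apply: leq_trans le.
  by case/card_gt0P => k; rewrite inE => /eqP; exists k.
have ne : g i' != g i by rewrite ia ib eq_sym.
have ca : #|cls g i| = s a by rewrite -cg /cnt /cls ia.
have cb : #|cls g i'| = s b by rewrite -cg /cnt /cls ib.
exists (cnt (relab g i (g i'))); split.
- exists (relab g i (g i')); split => //.
  apply: reach_step rg _.
  exists i, (cls g i'); split; last by rewrite move_Pof.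
  by apply: IS_complete => //; rewrite ca cb.
- by rewrite cnt_relab // -ia eqxx ia cg.
- by rewrite cnt_relab // ia ib eq_sym (negbTE ab) eqxx cg.
- by move=> x xa xb; rewrite cnt_relab // ia ib (negbTE xa) (negbTE xb) cg.
Qed.

Lemma Reach0 n : Reach n 0 (fun c => (c < n)%N : nat).
Proof.
exists (@g0 n); split; first by rewrite Pof_g0; apply: reach0.
move=> c; rewrite /cnt /g0.
case: (ltnP c n) => [lt|ge] /=.
  rewrite (_ : [set j : 'I_n | nat_of_ord j == c] = [set Ordinal lt]) ?cards1 //.
  by apply/setP => y; rewrite !inE -val_eqE.
apply/eqP; rewrite cards_eq0; apply/eqP/setP => y; rewrite !inE.
by apply/negbTE; apply: contraTneq (ltn_ord y) => ->; rewrite -leqNgt.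
Qed.

Ltac neqn := apply/eqP; lia.

Lemma cascade n len : forall j m s, Reach n m s -> (0 < s j)%N -> (s j <= s j.+1)%N ->
  (forall l, (j < l)%N -> (l < j + len.+1)%N -> (s l < s l.+1)%N) ->
  exists s', [/\ Reach n (m + len.+1) s', s' j = (s j).-1,
    s' (j + len.+1) = (s (j + len.+1)).+1
    & forall x, x != j -> x != j + len.+1 -> s' x = s x].
Proof.
elim: len => [|len IH] j m s R sj0 sj1 mid.
  have ab : j != j.+1 by neqn.
  have [s' [R' e1 e2 e3]] := Reach_move R ab sj0 sj1.
  exists s'; rewrite !addn1; split => //.
have ab : j != j.+1 by neqn.
have [s1 [R1 e1 e2 e3]] := Reach_move R ab sj0 sj1.
have h1 : (0 < s1 j.+1)%N by rewrite e2.
have h2 : (s1 j.+1 <= s1 j.+2)%N.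
  rewrite e2 e3; try neqn.
  by apply: mid; lia.
have h3 : forall l, (j.+1 < l)%N -> (l < j.+1 + len.+1)%N -> (s1 l < s1 l.+1)%N.
  move=> l l1 l2; rewrite !e3; try neqn.
  by apply: mid; lia.
have [s2 [R2 f1 f2 f3]] := IH j.+1 m.+1 s1 R1 h1 h2 h3.
exists s2; split.
- by rewrite (_ : m + len.+2 = m.+1 + len.+1)%N; [ | lia].
- by rewrite f3 ?e1; try neqn.
- rewrite (_ : j + len.+2 = j.+1 + len.+1)%N; last lia.
  by rewrite f2 e3; try neqn.
- move=> x xj xt.
  case: (eqVneq x j.+1) => [->|xj1].
    by rewrite f1 e2.
  rewrite f3 ?e3 //; neqn.
Qed.

Lemma repeatc n j len : forall r m s, Reach n m s -> (r <= s j)%N -> (s j <= s j.+1)%N ->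
  (forall l, (j < l)%N -> (l < j + len.+1)%N -> (s l < s l.+1)%N) ->
  exists s', [/\ Reach n (m + r * len.+1) s', s' j = s j - r,
    s' (j + len.+1) = s (j + len.+1) + r
    & forall x, x != j -> x != j + len.+1 -> s' x = s x].
Proof.
elim=> [|r IH] m s R rj sj1 mid.
  by exists s; rewrite mul0n addn0 subn0 addn0; split.
have sj0 : (0 < s j)%N by lia.
have [s1 [R1 e1 e2 e3]] := cascade R sj0 sj1 mid.
have g1 : forall x, x != j -> (s x <= s1 x)%N.
  move=> x xj; case: (eqVneq x (j + len.+1)) => [->|xt]; first by rewrite e2.
  by rewrite e3.
have h1 : (r <= s1 j)%N by rewrite e1; lia.
have h2 : (s1 j <= s1 j.+1)%N.
  rewrite e1; apply: leq_trans (g1 _ _); last by neqn.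
  by apply: leq_trans sj1; apply: leq_pred.
have h3 : forall l, (j < l)%N -> (l < j + len.+1)%N -> (s1 l < s1 l.+1)%N.
  move=> l l1 l2; rewrite (e3 l); try neqn.
  by apply: leq_trans (mid l l1 l2) (g1 _ _); neqn.
have [s2 [R2 f1 f2 f3]] := IH _ s1 R1 h1 h2 h3.
exists s2; split.
- by rewrite (_ : m + r.+1 * len.+1 = m + len.+1 + r * len.+1)%N; [ | rewrite mulSn; lia].
- by rewrite f1 e1; lia.
- by rewrite f2 e2; lia.
- by move=> x xj xt; rewrite f3 // e3.
Qed.

Definition Stair (k j T : nat) (s : nat -> nat) :=
  [/\ forall x, (j <= x)%N -> (x < k)%N -> s x = x.+1, s k = T & (k < T)%N].

Lemma phases n k : forall r j m s T, (j + r = k)%N -> Reach n m s -> Stair k j T s ->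
  exists m', (exists s', Reach n m' s') /\
    (6 * m + 3 * k.+1 * r * r.+1 <= 6 * m' + r * r.+1 * (2 * r).+1)%N.
Proof.
elim=> [|r IH] j m s T jr R [st sk kT].
  by exists m; split; [exists s | lia].
have jk : (j < k)%N by lia.
have sj : s j = j.+1 by apply: st.
have sj1 : (s j <= s j.+1)%N.
  rewrite sj; case: (ltnP j.+1 k) => h.
    rewrite (st j.+1); [ lia | lia | lia].
  have -> : j.+1 = k by lia.
  by rewrite sk; lia.
have mid : forall l, (j < l)%N -> (l < j + r.+1)%N -> (s l < s l.+1)%N.
  move=> l l1 l2; rewrite (st l); [ | lia | lia].
  case: (ltnP l.+1 k) => h.
    rewrite (st l.+1); [ lia | lia | lia].
  have -> : l.+1 = k by lia.
  by rewrite sk; lia.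
have [s1 [R1 e1 e2 e3]] := repeatc (r := j.+1) R (eq_leq (esym sj)) sj1 mid.
have St : Stair k j.+1 (T + j.+1) s1.
  split.
  - by move=> x x1 x2; rewrite e3; try neqn; apply: st; lia.
  - by rewrite -jr e2 jr sk.
  - lia.
have jr' : (j.+1 + r = k)%N by lia.
have [m' [S' ineq]] := IH j.+1 _ _ _ jr' R1 St.
exists m'; split => //.
move: ineq; rewrite -jr; nia.
Qed.

Lemma fill n c : forall r p m s, Reach n m s -> (0 < s c)%N ->
  (forall i, (i < r)%N -> s (p + i) = 1%N) -> (c < p)%N ->
  exists m' s', [/\ Reach n m' s', s' c = s c + r
    & forall x, x != c -> (x < p)%N \/ (p + r <= x)%N -> s' x = s x].
Proof.
elim=> [|r IH] p m s R sc0 pool cp.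
  by exists m, s; rewrite addn0; split.
have ab : p != c by neqn.
have sp : s p = 1%N by rewrite -(addn0 p); apply: pool.
have sp0 : (0 < s p)%N by rewrite sp.
have spc : (s p <= s c)%N by rewrite sp.
have [s1 [R1 e1 e2 e3]] := Reach_move R ab sp0 spc.
have h1 : (0 < s1 c)%N by rewrite e2.
have h2 : forall i, (i < r)%N -> s1 (p.+1 + i) = 1%N.
  move=> i ir; rewrite e3; try neqn.
  by rewrite (_ : (p.+1 + i = p + i.+1)%N); [apply: pool | lia].
have h3 : (c < p.+1)%N by lia.
have [m' [s' [R' f1 f2]]] := IH p.+1 _ s1 R1 h1 h2 h3.
exists m', s'; split => //.
- by rewrite f1 e2; lia.
- move=> x xc xr; rewrite f2 //; last by lia.
  rewrite e3 //; neqn.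
Qed.

Lemma build k : forall c, (c <= k.+1)%N -> exists m s,
  [/\ Reach (k.+1 * k.+1) m s,
      forall x, (x < c)%N -> s x = x.+1,
      forall x, (c <= x)%N -> (x <= k)%N -> s x = 1%N
    & forall y i, (c <= y)%N -> (y <= k)%N -> (i < k)%N -> s (k.+1 + y * k + i) = 1%N].
Proof.
elim=> [|c IH] ck.
  exists 0%N, (fun c => (c < k.+1 * k.+1)%N : nat); split.
  - exact: Reach0.
  - by [].
  - by move=> x _ xk /=; rewrite (_ : (x < k.+1 * k.+1)%N) //; nia.
  - move=> y i _ yk ik /=; rewrite (_ : (k.+1 + y * k + i < k.+1 * k.+1)%N) //.
    have : (y * k <= k * k)%N by apply: leq_mul.
    nia.
have [m [s [R s1 s2 s3]]] := IH (ltnW ck).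
have sc0 : (0 < s c)%N by rewrite s2 //; lia.
have pool : forall i, (i < c)%N -> s (k.+1 + c * k + i) = 1%N.
  by move=> i ic; apply: s3 => //; lia.
have cp : (c < k.+1 + c * k)%N by lia.
have [m' [s' [R' f1 f2]]] := fill R sc0 pool cp.
exists m', s'; split => //.
- move=> x xc; case: (eqVneq x c) => [->|xnc].
    by rewrite f1 s2 //; lia.
  by rewrite f2 //; [rewrite s1 //; lia | left; lia].
- by move=> x cx xk; rewrite f2; [rewrite s2 //; lia | neqn | left; lia].
- move=> y i cy yk ik.
  have : (c.+1 * k <= y * k)%N by apply: leq_mul.
  move=> hy.
  rewrite f2; [rewrite s3 //; lia | neqn | right; nia].
Qed.

Lemma lower : exists d : nat, (0 < d)%N /\
     forall N : nat, exists n : nat, (N <= n)%N /\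
       exists e : rel 'I_n, simple_symmetric_game e /\
         exists (m : nat) (f : nat -> {set {set 'I_n}}),
           IS_sequence_from_singletons e m f /\ (n ^ 3 <= d * m ^ 2)%N.
Proof.
exists 144%N; split => // N.
pose k := N.+1.
exists (k.+1 * k.+1)%N; split; first by rewrite /k; nia.
exists (ce _); split; first exact: ce_game.
have [m [s [R s1 _ _]]] := build (leqnn k.+1).
have St : Stair k 0 k.+1 s.
  split; [by move=> x _ xk; apply: s1; lia | by apply: s1 | by []].
have e0 : (0 + k = k)%N by [].
have [m' [[s' [g [[f [sq fm]] _]]] ineq]] := phases e0 R St.
exists m', f; split => //.
have h6 : (k * k.+1 * k.+2 <= 6 * m')%N by nia.
have hA : (k.+1 * k.+1 <= 2 * (k * k.+2))%N by rewrite /k; nia.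
set A := (k.+1 * k.+1)%N in hA *.
set B := (k * k.+2)%N in hA.
have h1 : (A ^ 3 <= 4 * (B * B * A))%N.
  rewrite (_ : A ^ 3 = A * A * A)%N; last by rewrite !expnS expn0 muln1 mulnA.
  rewrite (_ : 4 * (B * B * A) = (2 * B) * (2 * B) * A)%N; last by ring.
  by apply: leq_mul => //; apply: leq_mul.
have h2 : (B * B * A = (k * k.+1 * k.+2) * (k * k.+1 * k.+2))%N by rewrite /A /B; ring.
have h3 : ((k * k.+1 * k.+2) * (k * k.+1 * k.+2) <= (6 * m') * (6 * m'))%N by apply: leq_mul.
apply: (leq_trans h1).
rewrite h2 (_ : 144 * m' ^ 2 = 4 * ((6 * m') * (6 * m')))%N; last by ring.
by rewrite leq_mul2l.
Qed.

Theorem proposition5p4 :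
  (* upper bound O(n^2), uniformly in n and the game *)
  (exists K : nat, forall (n : nat) (e : rel 'I_n),
      simple_symmetric_game e ->
      forall (m : nat) (f : nat -> {set {set 'I_n}}),
        IS_sequence_from_singletons e m f -> m <= K * n ^ 2)
  /\
  (* lower bound Omega(n sqrt n) for infinitely many n:
     m >= c n^(3/2) with c = 1/sqrt d, i.e. d * m^2 >= n^3 *)
  (exists d : nat, 0 < d /\
     forall N : nat, exists n : nat, N <= n /\
       exists e : rel 'I_n, simple_symmetric_game e /\
         exists (m : nat) (f : nat -> {set {set 'I_n}}),
           IS_sequence_from_singletons e m f /\ n ^ 3 <= d * m ^ 2).
Proof.
split; last exact: lower.
by exists 1%N; exact: upper.
Qed.
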